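(* Let $k\ge 3$ be an integer such that every set of $k-1$ distinct positive integers has the LR property, and let $p$ be a positive integer. Let $N=\lfloor (k+1)p/2\rfloor$. Suppose there is no $k$-tuple $v_1,\ldots,v_k\in\{1,\ldots,N\}\setminus p\mathbb{N}$ such that (i) for every subset $S\subseteq\{v_1,\ldots,v_k\}$ of size $k-1$ we have $\gcd(S\cup\{(k+1)p\})=1$, and (ii) $\{v_1,\ldots,v_k\}$ covers $\{1,\ldots,N\}$. Then for every set $\{v_1,\ldots,v_k\}$ of $k$ distinct integers that does not have the LR property, $p$ divides $\prod_{i=1}^k v_i$.
   Context: For a real number $x$, $\|x\|$ denotes the distance from $x$ to the nearest integer. A finite set $S$ of $m$ integers has the LR (lonely runner) property if there exists a real $t$ such that $\|tv\|\ge \frac{1}{m+1}$ for all $v\in S$. Given $k$ and $p$, an integer $v$ covers an integer $j$ if $\left\|\frac{jv}{(k+1)p}\right\|<\frac{1}{k+1}$; a set $\{v_1,\ldots,v_i\}$ covers a set $T$ of integers if every element of $T$ is covered by at least one $v_l$. $p\mathbb{N}$ denotes the set of multiples of $p$. The hypothesis ''every set of $k-1$ distinct positive integers has the LR property'' is what the paper calls ''the lonely runner conjecture holds for $k-1$''. *)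

(* Defs.v *)
From Stdlib Require Import Reals ZArith List Lia Lra.
Open Scope R_scope.

Definition dist_int (x : R) : R :=
  Rmin (x - IZR (Int_part x)) (IZR (Int_part x) + 1 - x).

(* A finite set S of integers (a duplicate-free list, so m = length S)
   has the LR property if some real t has ||t v|| >= 1/(m+1) for all v in S. *)
Definition LR (S : list Z) : Prop :=
  exists t : R, forall v : Z, In v S ->
    dist_int (t * IZR v) >= 1 / INR (length S + 1).

Definition LRC_holds (m : nat) : Prop :=
  forall S : list Z, NoDup S -> length S = m ->
    (forall v, In v S -> (0 < v)%Z) -> LR S.

Definition covers (k p : nat) (v j : Z) : Prop :=
  dist_int (IZR (j * v) / IZR (Z.of_nat ((k + 1) * p))) < 1 / INR (k + 1).

Definition covers_interval (k p : nat) (vs : list Z) (N : Z) : Prop :=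
  forall j : Z, (1 <= j <= N)%Z -> exists v, In v vs /\ covers k p v j.

Definition remove_nth {A : Type} (i : nat) (l : list A) : list A :=
  firstn i l ++ skipn (S i) l.

Definition gcd_with (g0 : Z) (l : list Z) : Z := fold_right Z.gcd g0 l.

Definition prodZ (l : list Z) : Z := fold_right Z.mul 1%Z l.

(* Main.v *)
Require Import Defs.
From Stdlib Require Import Reals ZArith List Lia Lra Classical.
Open Scope R_scope.

Lemma dist_le x (n : Z) : dist_int x <= Rabs (x - IZR n).
Proof.
  unfold dist_int. destruct (base_Int_part x) as [H1 H2].
  set (f := Int_part x) in *.
  destruct (Z_le_gt_dec n f) as [Hn|Hn].
  - apply IZR_le in Hn. eapply Rle_trans; [apply Rmin_l|].
    eapply Rle_trans; [|apply Rle_abs]. lra.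
  - assert (Hn' : (f + 1 <= n)%Z) by lia. apply IZR_le in Hn'. rewrite plus_IZR in Hn'.
    eapply Rle_trans; [apply Rmin_r|].
    rewrite <- Rabs_Ropp. eapply Rle_trans; [|apply Rle_abs]. lra.
Qed.

Lemma dist_att x : exists n : Z, dist_int x = Rabs (x - IZR n).
Proof.
  unfold dist_int. destruct (base_Int_part x) as [H1 H2].
  set (f := Int_part x) in *.
  unfold Rmin; destruct (Rle_dec _ _).
  - exists f. rewrite Rabs_pos_eq; lra.
  - exists (f+1)%Z. rewrite plus_IZR. rewrite Rabs_left1; lra.
Qed.

Lemma dist_shift x (n : Z) : dist_int (x + IZR n) = dist_int x.
Proof.
  apply Rle_antisym.
  - destruct (dist_att x) as [m Hm]. rewrite Hm.
    eapply Rle_trans; [apply (dist_le _ (m+n))|]. rewrite plus_IZR.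
    replace (x + IZR n - (IZR m + IZR n)) with (x - IZR m) by ring. lra.
  - destruct (dist_att (x + IZR n)) as [m Hm]. rewrite Hm.
    eapply Rle_trans; [apply (dist_le _ (m-n))|]. rewrite minus_IZR.
    replace (x - (IZR m - IZR n)) with (x + IZR n - IZR m) by ring. lra.
Qed.

Lemma dist_opp x : dist_int (- x) = dist_int x.
Proof.
  apply Rle_antisym.
  - destruct (dist_att x) as [m Hm]. rewrite Hm.
    eapply Rle_trans; [apply (dist_le _ (-m))|]. rewrite opp_IZR.
    rewrite <- Rabs_Ropp. right. f_equal. ring.
  - destruct (dist_att (-x)) as [m Hm]. rewrite Hm.
    eapply Rle_trans; [apply (dist_le _ (-m))|]. rewrite opp_IZR.
    rewrite <- Rabs_Ropp. right. f_equal. ring.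
Qed.

Lemma dist_quarter x (n : Z) : 1/4 <= x - IZR n <= 3/4 -> 1/4 <= dist_int x.
Proof.
  intros H. destruct (dist_att x) as [m Hm]. rewrite Hm.
  destruct (Z_le_gt_dec m n) as [Hn|Hn].
  - apply IZR_le in Hn. eapply Rle_trans; [|apply Rle_abs]. lra.
  - assert (Hn' : (n + 1 <= m)%Z) by lia. apply IZR_le in Hn'. rewrite plus_IZR in Hn'.
    rewrite <- Rabs_Ropp. eapply Rle_trans; [|apply Rle_abs]. lra.
Qed.

Lemma choose_c x h : 0 < h -> h <= 1/2 -> exists c : Z, 1/4 <= dist_int (x + IZR c * h).
Proof.
  intros Hh Hh2. destruct (archimed x) as [A B].
  set (y := x - IZR (up x) + 1).
  set (z := (1/4 - y) / h).
  destruct (archimed z) as [C D].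
  exists (up z).
  assert (E1 : IZR (up z) * h > z * h) by (apply Rmult_gt_compat_r; lra).
  assert (E2 : IZR (up z) * h <= (z + 1) * h) by (apply Rmult_le_compat_r; lra).
  assert (E3 : z * h = 1/4 - y) by (unfold z; field; lra).
  apply (dist_quarter _ (up x - 1)). rewrite minus_IZR. unfold y in *. lra.
Qed.

Lemma in_remove (i : nat) (l : list Z) v : In v (remove_nth i l) -> In v l.
Proof.
  revert i. induction l as [|a l IH]; intros i H; unfold remove_nth in *; destruct i; simpl in *; auto.
  destruct H as [H|H]; auto. right. apply (IH i). exact H.
Qed.

Lemma remove_cases (l : list Z) : forall (i : nat) v, (i < length l)%nat -> In v l ->
  v = nth i l 0%Z \/ In v (remove_nth i l).
Proof.
  induction l as [|a l IH]; intros i v Hi Hv; simpl in *; [lia|].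
  destruct i as [|i].
  - destruct Hv; [left; auto | right; unfold remove_nth; simpl; auto].
  - destruct Hv as [Hv|Hv].
    + right. unfold remove_nth. simpl. left; auto.
    + destruct (IH i v ltac:(lia) Hv) as [H|H]; [left; auto|right].
      unfold remove_nth in *. simpl. right; auto.
Qed.

Lemma remove_length (l : list Z) : forall (i : nat), (i < length l)%nat ->
  length (remove_nth i l) = (length l - 1)%nat.
Proof.
  induction l as [|a l IH]; intros i Hi; simpl in *; [lia|].
  destruct i as [|i].
  - unfold remove_nth; simpl. lia.
  - unfold remove_nth in *; simpl. rewrite IH by lia. lia.
Qed.

Lemma remove_map (f : Z -> Z) i l : remove_nth i (map f l) = map f (remove_nth i l).
Proof. unfold remove_nth. rewrite firstn_map, skipn_map, map_app. reflexivity. Qed.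

Lemma gcd_each g0 l : forall v, In v l -> (gcd_with g0 l | v)%Z.
Proof.
  induction l as [|a l IH]; intros v Hv; simpl in *; [tauto|].
  destruct Hv as [<-|Hv]; [apply Z.gcd_divide_l|].
  eapply Z.divide_trans; [apply Z.gcd_divide_r|]. auto.
Qed.

Lemma gcd_g0 g0 l : (gcd_with g0 l | g0)%Z.
Proof.
  induction l as [|a l IH]; simpl; [apply Z.divide_refl|].
  eapply Z.divide_trans; [apply Z.gcd_divide_r|]. auto.
Qed.

Lemma gcd_nonneg g0 l : (0 <= g0)%Z -> (0 <= gcd_with g0 l)%Z.
Proof. induction l; simpl; auto. intros; apply Z.gcd_nonneg. Qed.

Lemma gcd_greatest_l g0 l c : (c | g0)%Z -> (forall v, In v l -> (c | v)%Z) -> (c | gcd_with g0 l)%Z.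
Proof.
  induction l as [|a l IH]; simpl; auto. intros H1 H2.
  apply Z.gcd_greatest; auto.
Qed.

Lemma prod_div l v : In v l -> (v | prodZ l)%Z.
Proof.
  induction l as [|a l IH]; simpl; [tauto|]. intros [<-|H].
  - apply Z.divide_factor_l.
  - apply Z.divide_mul_r; auto.
Qed.

Definition red (M N v : Z) : Z :=
  if (v mod M <=? N)%Z then (v mod M)%Z else (M - v mod M)%Z.

Lemma red_div M N v d : (0 < M)%Z -> (d | M)%Z -> (d | red M N v)%Z -> (d | v)%Z.
Proof.
  intros HM HdM H. assert (Hv := Z.div_mod v M ltac:(lia)).
  rewrite Hv. apply Z.divide_add_r; [apply Z.divide_mul_l; auto|].
  unfold red in H. destruct (v mod M <=? N)%Z; auto.
  replace (v mod M)%Z with (M - (M - v mod M))%Z by lia.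
  apply Z.divide_sub_r; auto.
Qed.

Lemma red_range M N v : (0 < M)%Z -> N = (M / 2)%Z -> ~ (M | v)%Z ->
  (1 <= red M N v <= N)%Z.
Proof.
  intros HM HN Hd. assert (Hb := Z.mod_pos_bound v M HM).
  assert (Hnz : (v mod M <> 0)%Z) by (intro E; apply Hd; apply Z.mod_divide; lia).
  assert (H2 := Z.div_mod M 2 ltac:(lia)). assert (H3 := Z.mod_pos_bound M 2 ltac:(lia)).
  unfold red. destruct (Z.leb_spec (v mod M) N); lia.
Qed.

Lemma red_cover M N v j : (0 < M)%Z ->
  dist_int (IZR (j * red M N v) / IZR M) = dist_int (IZR (j * v) / IZR M).
Proof.
  intros HM. assert (HMr : IZR M <> 0) by (apply not_0_IZR; lia).
  assert (Hm := Z.mod_eq v M ltac:(lia)).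
  unfold red. destruct (v mod M <=? N)%Z.
  - rewrite Hm.
    replace (IZR (j * (v - M * (v / M))) / IZR M) with (IZR (j * v) / IZR M + IZR (- (j * (v / M)))).
    + apply dist_shift.
    + rewrite !mult_IZR, minus_IZR, opp_IZR, !mult_IZR. field; auto.
  - rewrite Hm.
    replace (IZR (j * (M - (v - M * (v / M)))) / IZR M) with (- (IZR (j * v) / IZR M) + IZR (j + j * (v / M))).
    + rewrite dist_shift. apply dist_opp.
    + rewrite !mult_IZR, !minus_IZR, plus_IZR, !mult_IZR. field; auto.
Qed.

Lemma map_inj_nodup (f : nat -> Z) l : (forall a b, f a = f b -> a = b) -> NoDup l -> NoDup (map f l).
Proof.
  intros Hf. induction 1; simpl; constructor; auto.
  intro H1. apply in_map_iff in H1. destruct H1 as [y [Hy Hy']]. apply Hf in Hy. subst; auto.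
Qed.

Definition sumabs (L : list Z) : Z := fold_right (fun v acc => Z.abs v + acc)%Z 0%Z L.

Lemma sumabs_ge L : (0 <= sumabs L)%Z /\ forall v, In v L -> (Z.abs v <= sumabs L)%Z.
Proof.
  induction L as [|a L [IH1 IH2]]; simpl; split; try tauto; try lia.
  intros v [<-|H]; [lia|]. specialize (IH2 v H). lia.
Qed.

Lemma LRC_sub m L : LRC_holds m -> (length L <= m)%nat -> (forall v, In v L -> v <> 0%Z) ->
  exists t, forall v, In v L -> 1 / INR (m + 1) <= dist_int (t * IZR v).
Proof.
  intros HL Hlen Hnz.
  set (A := nodup Z.eq_dec (map Z.abs L)).
  set (B0 := sumabs L).
  set (B := map (fun j => B0 + Z.of_nat j)%Z (seq 1 (m - length A))).
  destruct (sumabs_ge L) as [HB0 HB0'].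
  assert (HA : NoDup A) by apply NoDup_nodup.
  assert (HAl : (length A <= length L)%nat).
  { rewrite <- (length_map Z.abs L). apply NoDup_incl_length; auto.
    intros x Hx. apply nodup_In in Hx. exact Hx. }
  assert (HT : NoDup (A ++ B)).
  { apply NoDup_app; auto.
    - apply map_inj_nodup; [intros a b Hab; lia|apply seq_NoDup].
    - intros a Ha Hb. apply nodup_In, in_map_iff in Ha. destruct Ha as [v [<- Hv]].
      apply in_map_iff in Hb. destruct Hb as [j [Hj Hj']]. apply in_seq in Hj'.
      specialize (HB0' v Hv). fold B0 in HB0'. lia. }
  assert (HTl : length (A ++ B) = m).
  { rewrite length_app. unfold B. rewrite length_map, length_seq. lia. }
  destruct (HL (A ++ B) HT HTl) as [t Ht].
  { intros v Hv. apply in_app_or in Hv. destruct Hv as [Ha|Hb].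
    - apply nodup_In, in_map_iff in Ha. destruct Ha as [u [<- Hu]].
      specialize (Hnz u Hu). lia.
    - apply in_map_iff in Hb. destruct Hb as [j [Hj Hj']]. apply in_seq in Hj'. lia. }
  exists t. intros v Hv.
  assert (Hin : In (Z.abs v) (A ++ B)).
  { apply in_or_app. left. apply nodup_In, in_map_iff. eauto. }
  specialize (Ht _ Hin). rewrite HTl in Ht.
  destruct (Z.abs_spec v) as [[_ E]|[_ E]]; rewrite E in Ht.
  - lra.
  - rewrite opp_IZR, <- Ropp_mult_distr_r, dist_opp in Ht. lra.
Qed.

Lemma core (k p : nat) (N : Z) (S : list Z) :
 (3 <= k)%nat -> LRC_holds (k-1) -> (1<=p)%nat -> N = (Z.of_nat ((k+1)*p) / 2)%Z ->
 ~ (exists vs : list Z, length vs = k /\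
     (forall v, In v vs -> (1 <= v <= N)%Z /\ ~(Z.of_nat p | v)%Z) /\
     (forall i : nat, (i<k)%nat -> gcd_with (Z.of_nat ((k+1)*p)) (remove_nth i vs) = 1%Z) /\
     covers_interval k p vs N) ->
 length S = k -> ~ LR S -> (forall v, In v S -> ~(Z.of_nat p | v)%Z) ->
 (forall c, (forall v, In v S -> (c | v)%Z) -> (c | 1)%Z) -> False.
Proof.
  intros Hk HL Hp HN Hno Hlen HnLR Hndiv Hgcd.
  assert (H4 : (4 <= (k+1)*p)%nat) by nia.
  set (M := Z.of_nat ((k+1)*p)) in *.
  assert (HM : (0 < M)%Z) by lia.
  assert (HpM : (Z.of_nat p | M)%Z).
  { unfold M. rewrite Nat2Z.inj_mul. exists (Z.of_nat (k+1)). ring. }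
  assert (HMr : IZR M <> 0) by (apply not_0_IZR; lia).
  assert (HnotLR : forall t, exists v, In v S /\ dist_int (t * IZR v) < 1 / INR (k+1)).
  { intro t. apply NNPP; intro H. apply HnLR. exists t. intros v Hv. rewrite Hlen.
    apply Rnot_lt_ge. intro H'. apply H. eauto. }
  assert (Hk3 : 3 <= INR k) by (replace 3 with (INR 3) by (simpl; lra); apply le_INR; lia).
  assert (Hk1 : INR (k+1) = INR k + 1) by (rewrite plus_INR; simpl; ring).
  apply Hno. exists (map (red M N) S). split; [rewrite length_map; auto|]. split.
  { intros v Hv. apply in_map_iff in Hv. destruct Hv as [u [<- Hu]]. split.
    - apply red_range; auto. intro H. apply (Hndiv u Hu). eapply Z.divide_trans; eauto.
    - intro H. apply (Hndiv u Hu). eapply red_div; eauto. }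
  split.
  2:{ intros j Hj. destruct (HnotLR (IZR j / IZR M)) as [v [Hv Hd]].
      exists (red M N v). split; [apply in_map; auto|]. unfold covers. fold M.
      rewrite red_cover by auto.
      replace (IZR (j * v) / IZR M) with (IZR j / IZR M * IZR v); auto.
      rewrite mult_IZR. field; auto. }
  intros i Hi. rewrite remove_map.
  set (d := gcd_with M (map (red M N) (remove_nth i S))).
  destruct (Z.eq_dec d 1) as [E|Hd1]; auto. exfalso.
  assert (Hd0 : (0 <= d)%Z) by (apply gcd_nonneg; lia).
  assert (HdM : (d | M)%Z) by apply gcd_g0.
  assert (Hdz : d <> 0%Z) by (intro E; subst d; rewrite E in HdM; apply Z.divide_0_l in HdM; lia).
  assert (Hdall : forall v, In v (remove_nth i S) -> (d | v)%Z).
  { intros v Hv. apply (red_div M N); auto. apply gcd_each. apply in_map; auto. }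
  assert (HiS : (i < length S)%nat) by lia.
  set (w := nth i S 0%Z).
  assert (Hdw : ~ (d | w)%Z).
  { intro H. assert (H1 : (d | 1)%Z).
    { apply Hgcd. intros v Hv. destruct (remove_cases S i v HiS Hv) as [->|Hr]; auto. }
    apply Z.divide_pos_le in H1; lia. }
  destruct (LRC_sub (k-1) (remove_nth i S) HL) as [t0 Ht0].
  { rewrite remove_length; lia. }
  { intros v Hv E. apply (Hndiv v (in_remove _ _ _ Hv)). rewrite E. apply Z.divide_0_r. }
  replace (k - 1 + 1)%nat with k in Ht0 by lia.
  set (gw := Z.gcd w d).
  destruct (Z.gcd_bezout w d gw eq_refl) as [u [v0 Huv]].
  assert (Hgw0 : (0 <= gw)%Z) by apply Z.gcd_nonneg.
  assert (Hgwd : (gw | d)%Z) by apply Z.gcd_divide_r.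
  assert (Hgww : (gw | w)%Z) by apply Z.gcd_divide_l.
  destruct Hgwd as [q Hq].
  assert (Hgwpos : (0 < gw)%Z) by (destruct (Z.eq_dec gw 0); [subst; lia|lia]).
  assert (Hq2 : (2 <= q)%Z).
  { destruct (Z_le_gt_dec q 1); [|lia].
    assert (q <> 1%Z) by (intro; subst q; apply Hdw; rewrite Hq, Z.mul_1_l; auto).
    assert (0 < q)%Z by nia. lia. }
  set (h := IZR gw / IZR d).
  assert (Hdr : IZR d <> 0) by (apply not_0_IZR; auto).
  assert (Hh0 : 0 < h).
  { unfold h. apply Rdiv_lt_0_compat; apply IZR_lt; lia. }
  assert (Hh2 : h <= 1/2).
  { unfold h. rewrite Hq, mult_IZR.
    assert (IZR q >= 2) by (apply Rle_ge, IZR_le; lia).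
    assert (0 < IZR gw) by (apply IZR_lt; lia).
    replace (IZR gw / (IZR q * IZR gw)) with (/ IZR q) by (field; lra).
    replace (1/2) with (/ 2) by field. apply Rinv_le_contravar; lra. }
  destruct (choose_c (t0 * IZR w) h Hh0 Hh2) as [c Hc].
  apply HnLR. exists (t0 + IZR c * IZR u / IZR d). intros v Hv. rewrite Hlen.
  apply Rle_ge. rewrite Hk1.
  destruct (remove_cases S i v HiS Hv) as [->|Hr].
  - fold w.
    replace ((t0 + IZR c * IZR u / IZR d) * IZR w) with (t0 * IZR w + IZR c * h + IZR (- (c * v0))).
    + rewrite dist_shift. eapply Rle_trans; [|apply Hc].
      unfold Rdiv. rewrite !Rmult_1_l. apply Rinv_le_contravar; lra.
    + unfold h. rewrite <- Huv, opp_IZR, !mult_IZR, plus_IZR, !mult_IZR. field; auto.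
  - destruct (Hdall v Hr) as [e He].
    replace ((t0 + IZR c * IZR u / IZR d) * IZR v) with (t0 * IZR v + IZR (c * u * e)).
    + rewrite dist_shift. eapply Rle_trans; [|apply (Ht0 v Hr)].
      unfold Rdiv. rewrite !Rmult_1_l. apply Rinv_le_contravar; lra.
    + rewrite He, !mult_IZR. field; auto.
Qed.

Theorem lemma6 (k p : nat) :
  (3 <= k)%nat ->
  LRC_holds (k - 1) ->
  (1 <= p)%nat ->
  let N := (Z.of_nat ((k + 1) * p) / 2)%Z in
  ~ (exists vs : list Z,
        length vs = k /\
        (forall v, In v vs -> (1 <= v <= N)%Z /\ ~ (Z.of_nat p | v)%Z) /\
        (forall i : nat, (i < k)%nat ->
           gcd_with (Z.of_nat ((k + 1) * p)) (remove_nth i vs) = 1%Z) /\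
        covers_interval k p vs N) ->
  forall S : list Z, NoDup S -> length S = k -> ~ LR S ->
    (Z.of_nat p | prodZ S)%Z.
Proof.
  intros Hk HL Hp N Hno S _ Hlen HnLR.
  apply NNPP; intro Hnd.
  assert (Hndiv : forall v, In v S -> ~ (Z.of_nat p | v)%Z).
  { intros v Hv H. apply Hnd. eapply Z.divide_trans; [exact H|]. apply prod_div; auto. }
  set (g := gcd_with 0%Z S).
  assert (Hgv : forall v, In v S -> (g | v)%Z) by (apply gcd_each).
  assert (Hg0 : (0 <= g)%Z) by (apply gcd_nonneg; lia).
  assert (Hgz : g <> 0%Z).
  { intro E. destruct S as [|a S']; simpl in Hlen; [lia|].
    assert (Ha := Hgv a (or_introl eq_refl)). rewrite E in Ha. apply Z.divide_0_l in Ha.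
    apply (Hndiv a (or_introl eq_refl)). rewrite Ha. apply Z.divide_0_r. }
  apply (core k p N (map (fun v => v / g)%Z S) Hk HL Hp eq_refl Hno).
  - rewrite length_map; auto.
  - intros [t Ht]. apply HnLR. exists (t / IZR g). intros v Hv.
    specialize (Ht (v / g)%Z (in_map _ _ _ Hv)). rewrite length_map in Ht.
    destruct (Hgv v Hv) as [e He].
    rewrite He, Z.div_mul in Ht by auto.
    rewrite He, mult_IZR.
    replace (t / IZR g * (IZR e * IZR g)) with (t * IZR e); auto.
    field. apply not_0_IZR; auto.
  - intros v Hv H. apply in_map_iff in Hv. destruct Hv as [u [<- Hu]].
    destruct (Hgv u Hu) as [e He]. rewrite He, Z.div_mul in H by auto.
    apply (Hndiv u Hu). rewrite He. apply Z.divide_mul_l; auto.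
  - intros c Hc.
    assert (H : (c * g | g)%Z).
    { apply gcd_greatest_l; [apply Z.divide_0_r|].
      intros v Hv. destruct (Hgv v Hv) as [e He].
      assert (Hce : (c | e)%Z).
      { specialize (Hc (v / g)%Z (in_map _ _ _ Hv)). rewrite He, Z.div_mul in Hc; auto. }
      destruct Hce as [f Hf]. exists f. rewrite He, Hf. ring. }
    destruct H as [q Hq]. exists q.
    apply (Z.mul_cancel_r _ _ g Hgz). rewrite Z.mul_1_l at 1. rewrite Hq at 1. ring.
Qed.
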